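(* Let $\alpha\in(0,1]$, $0\le a<b$, and let $f:[a,b]\to\mathbb{R}$ be $\alpha$-fractional differentiable such that $D_\alpha f$ is increasing and $f$ is decreasing on $[a,b]$. Then $$ f\left(\frac{a+b}{2}\right)\le\frac{\alpha}{b^\alpha-a^\alpha}\int_a^b f(s)\,d_\alpha s\le f(b)+f(a)-f\left(\frac{a+b}{2}\right). $$
   Context: The conformable $\alpha$-fractional derivative is $D_\alpha f(t):=\lim_{\varepsilon\to 0}\frac{f(t+\varepsilon t^{1-\alpha})-f(t)}{\varepsilon}$ for $t>0$, $D_\alpha f(0):=\lim_{t\to0^+}D_\alpha f(t)$. Integrals: $\int_a^b h(s)\,d_\alpha s:=\int_a^b h(s)s^{\alpha-1}\,ds$. *)

(* Defs.v *)
From Stdlib Require Import Reals Lra.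
From Coquelicot Require Import Coquelicot.
Open Scope R_scope.

(* Real power x^y for x >= 0 with the convention 0^y = 0 (used for y > 0).
   (Stdlib's Rpower 0 y = exp (y * ln 0) = 1, which is wrong at 0.) *)
Definition rpow (x y : R) : R := if Rle_dec x 0 then 0 else Rpower x y.

Definition conf_deriv_at (a b alpha : R) (f : R -> R) (t l : R) : Prop :=
  forall e : R, 0 < e -> exists d : R, 0 < d /\
    forall h : R, h <> 0 -> Rabs h < d ->
      a <= t + h * rpow t (1 - alpha) <= b ->
      Rabs ((f (t + h * rpow t (1 - alpha)) - f t) / h - l) < e.

Definition conf_deriv_on (a b alpha : R) (f Df : R -> R) : Prop :=
  (forall t : R, a <= t <= b -> 0 < t -> conf_deriv_at a b alpha f t (Df t)) /\
  (a = 0 -> filterlim Df (at_right 0) (locally (Df 0))).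

(* Main.v *)
Require Import Defs.
From Stdlib Require Import Reals Lra Classical.
From Coquelicot Require Import Coquelicot.
Open Scope R_scope.


Lemma rpow_pos x y : 0 < x -> rpow x y = Rpower x y.
Proof. intros H. unfold rpow. destruct (Rle_dec x 0); [lra | reflexivity]. Qed.

Lemma rpow_0 y : rpow 0 y = 0.
Proof. unfold rpow. destruct (Rle_dec 0 0); [reflexivity | lra]. Qed.

Lemma Rpower_pos x y : 0 < Rpower x y.
Proof. apply exp_pos. Qed.

Lemma Rpower_0' x : Rpower x 0 = 1.
Proof. unfold Rpower. rewrite Rmult_0_l. apply exp_0. Qed.

Lemma Rp_inv t al : Rpower t (al - 1) = / Rpower t (1 - al).
Proof.
  assert (H : Rpower t (al - 1) * Rpower t (1 - al) = 1).
  { rewrite <- Rpower_plus. replace (al - 1 + (1 - al)) with 0 by ring. apply Rpower_0'. }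
  assert (0 < Rpower t (1 - al)) by apply Rpower_pos.
  apply Rmult_eq_reg_r with (Rpower t (1 - al)); [|lra].
  rewrite H, Rinv_l; lra.
Qed.

Lemma deriv_f a b al f Df t : 0 < al <= 1 -> 0 <= a -> conf_deriv_on a b al f Df ->
  a < t < b -> derivable_pt_lim f t (Df t * Rpower t (al - 1)).
Proof.
  intros Hal Ha [HD _] Ht eps Heps.
  set (k := Rpower t (1 - al)).
  assert (Hk : 0 < k) by apply Rpower_pos.
  assert (Hinv : Rpower t (al - 1) = / k) by apply Rp_inv.
  destruct (HD t ltac:(lra) ltac:(lra) (eps * k) ltac:(nra)) as [d [Hd Hd']].
  assert (Hmin : 0 < Rmin (d * k) (Rmin (t - a) (b - t))).
  { repeat apply Rmin_pos; nra. }
  exists (mkposreal _ Hmin). intros h Hh0 Hh. simpl in Hh.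
  assert (h1 : Rabs h < d * k) by (eapply Rlt_le_trans; [exact Hh | apply Rmin_l]).
  assert (h2 : Rabs h < t - a).
  { eapply Rlt_le_trans; [exact Hh |]. eapply Rle_trans; [apply Rmin_r | apply Rmin_l]. }
  assert (h3 : Rabs h < b - t).
  { eapply Rlt_le_trans; [exact Hh |]. eapply Rle_trans; [apply Rmin_r | apply Rmin_r]. }
  apply Rabs_def2 in h2. apply Rabs_def2 in h3.
  specialize (Hd' (h / k)).
  rewrite rpow_pos in Hd' by lra. fold k in Hd'.
  replace (t + h / k * k) with (t + h) in Hd' by (field; lra).
  assert (Hq : Rabs ((f (t + h) - f t) / (h / k) - Df t) < eps * k).
  { apply Hd'.
    - intro E; apply Hh0. replace h with (h / k * k) by (field; lra). rewrite E; ring.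
    - unfold Rdiv. rewrite Rabs_mult, Rabs_inv, (Rabs_pos_eq k) by lra.
      apply Rmult_lt_reg_r with k; [lra |]. rewrite Rmult_assoc, Rinv_l by lra. lra.
    - lra. }
  replace ((f (t + h) - f t) / h - Df t * Rpower t (al - 1))
    with (/ k * ((f (t + h) - f t) / (h / k) - Df t)).
  2:{ rewrite Hinv. field. split; [lra | exact Hh0]. }
  rewrite Rabs_mult, Rabs_inv, (Rabs_pos_eq k) by lra.
  apply Rmult_lt_reg_l with k; [lra |]. rewrite <- Rmult_assoc, Rinv_r, Rmult_1_l by lra. lra.
Qed.


Definition cwf (p q : R) (h : R -> R) (x : R) : Prop :=
  filterlim h (within (fun y => p <= y <= q) (locally x)) (locally (h x)).

Lemma cwf_of_eps p q h x :
  (forall e, 0 < e -> exists d, 0 < d /\ forall y, p <= y <= q -> Rabs (y - x) < d ->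
     Rabs (h y - h x) < e) -> cwf p q h x.
Proof.
  intros H. unfold cwf. apply filterlim_locally. intros eps.
  destruct (H eps (cond_pos eps)) as [d [Hd Hd']].
  exists (mkposreal d Hd). intros y Hy Hpq. apply Hd'; auto.
Qed.

Lemma cwf_cont p q g x : continuity_pt g x -> cwf p q g x.
Proof.
  intros H. apply continuity_pt_filterlim in H. unfold cwf.
  eapply filterlim_filter_le_1; [| exact H]. apply filter_le_within.
Qed.

Lemma cwf_plus p q h g x : cwf p q h x -> cwf p q g x -> cwf p q (fun y => h y + g y) x.
Proof.
  intros Hh Hg. unfold cwf.
  apply (filterlim_comp_2 h g Rplus Hh Hg (filterlim_plus (h x) (g x))).
Qed.

Lemma cwf_mult p q h g x : cwf p q h x -> cwf p q g x -> cwf p q (fun y => h y * g y) x.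
Proof.
  intros Hh Hg. unfold cwf.
  apply (filterlim_comp_2 h g Rmult Hh Hg (@filterlim_mult R_AbsRing (h x) (g x))).
Qed.

Definition clamp (p q x : R) := Rmax p (Rmin x q).

Lemma clamp_in p q x : p <= q -> p <= clamp p q x <= q.
Proof. intros H. unfold clamp, Rmax, Rmin. repeat destruct Rle_dec; lra. Qed.

Lemma clamp_id p q x : p <= x <= q -> clamp p q x = x.
Proof. intros H. unfold clamp, Rmax, Rmin. repeat destruct Rle_dec; lra. Qed.

Lemma clamp_lip p q x y : Rabs (clamp p q y - clamp p q x) <= Rabs (y - x).
Proof.
  unfold clamp, Rmax, Rmin. unfold Rabs.
  repeat (destruct Rle_dec); repeat (destruct Rcase_abs); lra.
Qed.

Lemma clamp_cont p q h : p <= q -> (forall x, p <= x <= q -> cwf p q h x) ->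
  forall z, continuous (fun y => h (clamp p q y)) z.
Proof.
  intros Hpq H z. unfold continuous.
  eapply filterlim_comp; [| apply (H _ (clamp_in p q z Hpq))].
  intros P [eps HP]. exists eps. intros y Hy.
  apply HP.
  - unfold ball in *; simpl in *. unfold AbsRing_ball in *.
    eapply Rle_lt_trans; [apply clamp_lip | exact Hy].
  - apply clamp_in; auto.
Qed.

Lemma mvt_in h dh p q : p < q ->
  (forall x, p < x < q -> derivable_pt_lim h x (dh x)) ->
  (forall x, p <= x <= q -> cwf p q h x) ->
  exists c, p <= c <= q /\ h q - h p = dh c * (q - p).
Proof.
  intros Hpq Hd Hc.
  set (g := fun y => h (clamp p q y)).
  assert (Hg : forall x, p <= x <= q -> g x = h x).
  { intros x Hx. unfold g. rewrite clamp_id; auto. }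
  destruct (MVT_gen g p q dh) as [c [Hc1 Hc2]].
  - rewrite Rmin_left, Rmax_right by lra. intros x Hx.
    apply is_derive_Reals. intros eps Heps.
    destruct (Hd x Hx eps Heps) as [d Hd'].
    assert (Hm : 0 < Rmin d (Rmin (x - p) (q - x))).
    { repeat apply Rmin_pos; try lra. apply cond_pos. }
    exists (mkposreal _ Hm). intros e He0 He. simpl in He.
    assert (h1 : Rabs e < d) by (eapply Rlt_le_trans; [exact He | apply Rmin_l]).
    assert (h2 : Rabs e < x - p).
    { eapply Rlt_le_trans; [exact He |]. eapply Rle_trans; [apply Rmin_r | apply Rmin_l]. }
    assert (h3 : Rabs e < q - x).
    { eapply Rlt_le_trans; [exact He |]. eapply Rle_trans; [apply Rmin_r | apply Rmin_r]. }
    apply Rabs_def2 in h2. apply Rabs_def2 in h3.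
    rewrite !Hg by lra. apply Hd'; auto.
  - rewrite Rmin_left, Rmax_right by lra. intros x Hx.
    apply continuity_pt_filterlim. apply clamp_cont; [lra | exact Hc].
  - rewrite Rmin_left, Rmax_right in Hc1 by lra.
    exists c. split; auto. rewrite <- !Hg by lra. exact Hc2.
Qed.


Lemma exp_le x y : x <= y -> exp x <= exp y.
Proof. intros [H|H]; [left; apply exp_increasing; auto | subst; lra]. Qed.

Lemma ln_le_m1 x : 0 < x -> ln x <= x - 1.
Proof. intros Hx. pose proof (exp_ineq1_le (ln x)). rewrite exp_ln in H by auto. lra. Qed.

Lemma bernoulli t al : 0 < t -> 0 < al <= 1 -> Rpower t al <= 1 + al * (t - 1).
Proof.
  intros Ht Hal. set (s := 1 + al * (t - 1)).
  assert (Hs : 0 < s) by (unfold s; nra).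
  set (u := / s).
  assert (Hu : 0 < u) by (apply Rinv_0_lt_compat; auto).
  assert (Hsu : s * u = 1) by (unfold u; field; lra).
  pose proof (ln_le_m1 (t * u) ltac:(nra)) as H1.
  pose proof (ln_le_m1 u Hu) as H2.
  rewrite ln_mult in H1 by auto.
  assert (Hlu : ln u = - ln s) by (unfold u; apply ln_Rinv; auto).
  rewrite Hlu in H1, H2.
  assert (Hk : al * ln t <= ln s).
  { assert (E : al * (t * u - 1) = (1 - al) * (1 - u)).
    { assert (al * t * u = 1 - u + al * u).
      { unfold s in Hsu. nra. }
      nra. }
    nra. }
  unfold Rpower. rewrite <- (exp_ln s) by auto. apply exp_le. lra.
Qed.

Lemma Rpower_div x y al : 0 < x -> 0 < y -> Rpower (x / y) al = Rpower x al / Rpower y al.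
Proof.
  intros Hx Hy. unfold Rpower. rewrite ln_div by auto.
  replace (al * (ln x - ln y)) with (al * ln x + - (al * ln y)) by ring.
  rewrite exp_plus, exp_Ropp. reflexivity.
Qed.

Lemma bern2 x m al : 0 < x -> 0 < m -> 0 < al <= 1 ->
  Rpower x al <= Rpower m al * (1 + al * (x / m - 1)).
Proof.
  intros Hx Hm Hal. pose proof (bernoulli (x / m) al ltac:(apply Rdiv_lt_0_compat; auto) Hal) as H.
  rewrite Rpower_div in H by auto.
  assert (HM : 0 < Rpower m al) by apply Rpower_pos.
  apply Rmult_le_compat_l with (r := Rpower m al) in H; [|lra].
  replace (Rpower m al * (Rpower x al / Rpower m al)) with (Rpower x al) in H by (field; lra).
  exact H.
Qed.

Lemma concave_mid a b al : 0 <= a -> a < b -> 0 < al <= 1 ->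
  (rpow a al + rpow b al) / 2 <= Rpower ((a + b) / 2) al.
Proof.
  intros Ha Hab Hal. set (m := (a + b) / 2).
  assert (Hm : 0 < m) by (unfold m; lra).
  rewrite (rpow_pos b) by lra.
  pose proof (bern2 b m al ltac:(lra) Hm Hal) as Hb.
  assert (HM : 0 < Rpower m al) by apply Rpower_pos.
  destruct (Req_dec a 0) as [E|E].
  - subst a. rewrite rpow_0.
    replace (b / m) with 2 in Hb by (unfold m; field; lra).
    assert (al * Rpower m al <= Rpower m al) by nra. lra.
  - rewrite (rpow_pos a) by lra.
    pose proof (bern2 a m al ltac:(lra) Hm Hal) as Ha'.
    assert (E2 : b / m = 2 - a / m) by (unfold m; field; lra).
    rewrite E2 in Hb.
    assert (Rpower m al * (1 + al * (a / m - 1)) + Rpower m al * (1 + al * (2 - a / m - 1)) = 2 * Rpower m al) by ring.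
    lra.
Qed.

Lemma Rpower_inv_id x al : 0 < x -> 0 < al -> Rpower (Rpower x al) (/ al) = x.
Proof.
  intros Hx Hal. rewrite Rpower_mult. replace (al * / al) with 1 by (field; lra).
  apply Rpower_1; auto.
Qed.

Lemma Pcont a al : 0 <= a -> 0 < al ->
  forall eps, 0 < eps -> exists d, 0 < d /\ forall x, a < x < a + d ->
    rpow a al <= Rpower x al < rpow a al + eps.
Proof.
  intros Ha Hal eps Heps.
  assert (HA : 0 <= rpow a al).
  { unfold rpow. destruct Rle_dec; [lra | left; apply Rpower_pos]. }
  set (T := Rpower (rpow a al + eps) (/ al)).
  assert (HT : a < T).
  { destruct (Req_dec a 0) as [E|E].
    - subst. apply Rpower_pos.
    - unfold T. rewrite (rpow_pos a) by lra.
      rewrite <- (Rpower_inv_id a al) at 1 by lra.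
      apply Rlt_Rpower_l.
      + apply Rinv_0_lt_compat; auto.
      + split; [apply Rpower_pos | lra]. }
  exists (T - a). split; [lra|]. intros x Hx. split.
  - destruct (Req_dec a 0) as [E|E].
    + subst. rewrite rpow_0. left; apply Rpower_pos.
    + rewrite rpow_pos by lra. apply Rle_Rpower_l; lra.
  - replace (rpow a al + eps) with (Rpower T al).
    + apply Rlt_Rpower_l; lra.
    + unfold T. rewrite Rpower_mult. replace (/ al * al) with 1 by (field; lra).
      apply Rpower_1; lra.
Qed.


Lemma abs_div_lt z k c : 0 < k -> Rabs z < c * k -> Rabs (z / k) < c.
Proof.
  intros Hk H. unfold Rdiv. rewrite Rabs_mult, Rabs_inv, (Rabs_pos_eq k) by lra.
  apply Rmult_lt_reg_r with k; [lra |]. rewrite Rmult_assoc, Rinv_l by lra. lra.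
Qed.

Lemma cont_f a b al f Df t : 0 < al <= 1 -> conf_deriv_on a b al f Df ->
  a <= t <= b -> 0 < t -> forall e, 0 < e -> exists d, 0 < d /\
  forall y, a <= y <= b -> Rabs (y - t) < d -> Rabs (f y - f t) < e.
Proof.
  intros Hal [HD _] Ht Ht0 e He.
  set (k := Rpower t (1 - al)).
  assert (Hk : 0 < k) by apply Rpower_pos.
  destruct (HD t Ht Ht0 1 Rlt_0_1) as [d0 [Hd0 Hd0']].
  set (M := 1 + Rabs (Df t)).
  assert (HM : 0 < M) by (unfold M; pose proof (Rabs_pos (Df t)); lra).
  exists (Rmin (d0 * k) (e * k / M)). split.
  { apply Rmin_pos; [nra | apply Rdiv_lt_0_compat; nra]. }
  intros y Hy Hyt.
  destruct (Req_dec y t) as [E|E].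
  { subst. replace (f t - f t) with 0 by ring. rewrite Rabs_R0. lra. }
  set (h := (y - t) / k).
  assert (Hh0 : h <> 0).
  { intro H0. apply E. assert (y - t = 0).
    { replace (y - t) with ((y - t) / k * k) by (field; lra). fold h. rewrite H0; ring. }
    lra. }
  specialize (Hd0' h). rewrite rpow_pos in Hd0' by lra. fold k in Hd0'.
  replace (t + h * k) with y in Hd0' by (unfold h; field; lra).
  assert (Hq : Rabs ((f y - f t) / h - Df t) < 1).
  { apply Hd0'; [exact Hh0 | | lra].
    unfold h. apply abs_div_lt; auto.
    eapply Rlt_le_trans; [exact Hyt | apply Rmin_l]. }
  set (q := (f y - f t) / h) in *.
  assert (Hfq : f y - f t = q * h) by (unfold q; field; exact Hh0).
  rewrite Hfq, Rabs_mult.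
  assert (HqM : Rabs q < M).
  { unfold M. replace q with ((q - Df t) + Df t) at 1 by ring.
    pose proof (Rabs_triang (q - Df t) (Df t)). lra. }
  assert (HhM : Rabs h < e / M).
  { unfold h. apply abs_div_lt; auto.
    replace (e / M * k) with (e * k / M) by (field; lra).
    eapply Rlt_le_trans; [exact Hyt | apply Rmin_r]. }
  pose proof (Rabs_pos q). pose proof (Rabs_pos h).
  assert (M * (e / M) = e) by (field; lra).
  nra.
Qed.

Lemma dlin f y d c al : 0 < y -> derivable_pt_lim f y d ->
  derivable_pt_lim (fun z => f z + c * Rpower z al) y (d + c * (al * Rpower y (al - 1))).
Proof.
  intros Hy H. apply is_derive_Reals. apply is_derive_Reals in H.
  apply (is_derive_plus f (fun z => c * Rpower z al)); [exact H |].
  apply (is_derive_scal (fun z => Rpower z al)).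
  apply is_derive_Reals, derivable_pt_lim_power; auto.
Qed.

Lemma cont_cpow c al x : 0 < x -> continuity_pt (fun y => c * Rpower y al) x.
Proof.
  intros Hx. apply continuity_pt_filterlim. apply (ex_derive_continuous (fun y => c * Rpower y al)).
  exists (c * (al * Rpower x (al - 1))).
  apply (is_derive_scal (fun z => Rpower z al)).
  apply is_derive_Reals, derivable_pt_lim_power; auto.
Qed.

Lemma cwf_phi a b al f Df p q c : 0 < al <= 1 -> conf_deriv_on a b al f Df ->
  a <= p -> q <= b -> 0 < p ->
  forall x, p <= x <= q -> cwf p q (fun y => f y + c * Rpower y al) x.
Proof.
  intros Hal Hc Hp Hq Hp0 x Hx. apply cwf_plus.
  - apply cwf_of_eps. intros e He.
    destruct (cont_f a b al f Df x Hal Hc ltac:(lra) ltac:(lra) e He) as [d [Hd Hd']].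
    exists d. split; auto. intros y Hy Hyx. apply Hd'; auto. lra.
  - apply cwf_cont. apply cont_cpow. lra.
Qed.

Lemma Dneg a b al f Df t : 0 < al <= 1 -> 0 <= a -> conf_deriv_on a b al f Df ->
  (forall x y, a <= x -> x <= y -> y <= b -> f y <= f x) ->
  a < t < b -> Df t <= 0.
Proof.
  intros Hal Ha Hc Hfm Ht.
  pose proof (deriv_f a b al f Df t Hal Ha Hc Ht) as H.
  destruct (Rle_or_lt (Df t) 0) as [|Hpos]; auto. exfalso.
  set (l := Df t * Rpower t (al - 1)).
  assert (Hl : 0 < l) by (unfold l; pose proof (Rpower_pos t (al - 1)); nra).
  destruct (H l Hl) as [d Hd].
  set (h := Rmin (d / 2) ((b - t) / 2)).
  assert (Hh : 0 < h) by (unfold h; apply Rmin_pos; [pose proof (cond_pos d)|]; lra).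
  assert (Hh1 : h < d) by (unfold h; pose proof (cond_pos d); pose proof (Rmin_l (d / 2) ((b - t) / 2)); lra).
  assert (Hh2 : h < b - t) by (unfold h; pose proof (Rmin_r (d / 2) ((b - t) / 2)); lra).
  specialize (Hd h ltac:(lra) ltac:(rewrite Rabs_pos_eq; lra)).
  assert (Hf : f (t + h) <= f t) by (apply Hfm; lra).
  assert (Hq : (f (t + h) - f t) / h <= 0).
  { unfold Rdiv. assert (0 < / h) by (apply Rinv_0_lt_compat; lra). nra. }
  apply Rabs_def2 in Hd. fold l in Hd. lra.
Qed.


Lemma tangent a b al f Df t0 s : 0 < al <= 1 -> 0 <= a -> a < b ->
  conf_deriv_on a b al f Df ->
  (forall x y, a <= x -> x <= y -> y <= b -> Df x <= Df y) ->
  a < t0 < b -> a < s <= b ->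
  f t0 + Df t0 / al * (Rpower s al - Rpower t0 al) <= f s.
Proof.
  intros Hal Ha Hab Hc HDm Ht0 Hs.
  set (c := - (Df t0 / al)).
  set (phi := fun y => f y + c * Rpower y al).
  set (dphi := fun y => Df y * Rpower y (al - 1) + c * (al * Rpower y (al - 1))).
  assert (Hd : forall x, a < x < b -> derivable_pt_lim phi x (dphi x)).
  { intros x Hx. unfold phi, dphi. apply dlin; [lra |]. apply (deriv_f a b); auto. }
  assert (Hdphi : forall y, dphi y = (Df y - Df t0) * Rpower y (al - 1)).
  { intros y. unfold dphi, c. field. lra. }
  assert (Goal : phi t0 <= phi s).
  { destruct (Rtotal_order s t0) as [Hlt | [Heq | Hgt]].
    - destruct (mvt_in phi dphi s t0 Hlt) as [c0 [Hc0 Hm]].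
      + intros x Hx. apply Hd. lra.
      + apply (cwf_phi a b al f Df); auto; lra.
      + rewrite Hdphi in Hm.
        assert (Df c0 <= Df t0) by (apply HDm; lra).
        pose proof (Rpower_pos c0 (al - 1)).
        assert ((Df c0 - Df t0) * Rpower c0 (al - 1) * (t0 - s) <= 0).
        { apply Rmult_le_0_r; [| lra]. apply Rmult_le_0_r; lra. }
        lra.
    - subst. lra.
    - destruct (mvt_in phi dphi t0 s Hgt) as [c0 [Hc0 Hm]].
      + intros x Hx. apply Hd. lra.
      + apply (cwf_phi a b al f Df); auto; lra.
      + rewrite Hdphi in Hm.
        assert (Df t0 <= Df c0) by (apply HDm; lra).
        pose proof (Rpower_pos c0 (al - 1)).
        assert (0 <= (Df c0 - Df t0) * Rpower c0 (al - 1) * (s - t0)).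
        { apply Rmult_le_pos; [| lra]. apply Rmult_le_pos; lra. }
        lra. }
  unfold phi, c in Goal. lra.
Qed.

Lemma AltB a b al : 0 <= a -> a < b -> 0 < al -> rpow a al < Rpower b al.
Proof.
  intros Ha Hab Hal. destruct (Req_dec a 0) as [E|E].
  - subst. rewrite rpow_0. apply Rpower_pos.
  - rewrite rpow_pos by lra. apply Rlt_Rpower_l; lra.
Qed.

Lemma chord a b al f Df s : 0 < al <= 1 -> 0 <= a -> a < b ->
  conf_deriv_on a b al f Df ->
  (forall x y, a <= x -> x <= y -> y <= b -> Df x <= Df y) ->
  (forall x y, a <= x -> x <= y -> y <= b -> f y <= f x) ->
  a < s <= b ->
  f s <= f a + (f b - f a) / (Rpower b al - rpow a al) * (Rpower s al - rpow a al).
Proof.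
  intros Hal Ha Hab Hc HDm Hfm Hs.
  set (A := rpow a al). set (B := Rpower b al).
  assert (HAB : A < B) by (apply AltB; lra).
  set (v := (f b - f a) / (B - A)).
  assert (Hv : v * (B - A) = f b - f a) by (unfold v; field; lra).
  assert (Hfab : f b <= f a) by (apply Hfm; lra).
  assert (Hv0 : v <= 0).
  { unfold v, Rdiv. assert (0 < / (B - A)) by (apply Rinv_0_lt_compat; lra). nra. }
  destruct (Rle_or_lt (f s) (f a + v * (Rpower s al - A))) as [|Hbad]; [auto|]. exfalso.
  set (psi := fun y => f y + (- v) * Rpower y al).
  set (dpsi := fun y => Df y * Rpower y (al - 1) + (- v) * (al * Rpower y (al - 1))).
  assert (Hd : forall x, a < x < b -> derivable_pt_lim psi x (dpsi x)).
  { intros x Hx. unfold psi, dpsi. apply dlin; [lra |]. apply (deriv_f a b); auto. }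
  assert (Hdpsi : forall y, dpsi y = (Df y - v * al) * Rpower y (al - 1)).
  { intros y. unfold dpsi. ring. }
  assert (Hsb : s < b).
  { destruct Hs as [_ [Hsb|Hsb]]; auto. subst s. fold B in Hbad. nra. }
  destruct (mvt_in psi dpsi s b Hsb) as [xi [Hxi Hm]].
  { intros x Hx. apply Hd. lra. }
  { apply (cwf_phi a b al f Df); auto; lra. }
  rewrite Hdpsi in Hm.
  assert (Hxi' : Df xi - v * al < 0).
  { pose proof (Rpower_pos xi (al - 1)).
    assert (psi b - psi s < 0) by (unfold psi; fold B; nra).
    destruct (Rle_or_lt 0 (Df xi - v * al)) as [Hn|]; auto.
    assert (0 <= (Df xi - v * al) * Rpower xi (al - 1) * (b - s)).
    { apply Rmult_le_pos; [|lra]. apply Rmult_le_pos; lra. }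
    lra. }
  set (d0 := f s - (f a + v * (Rpower s al - A))).
  assert (Hd0 : 0 < d0) by (unfold d0; lra).
  set (w := - v).
  destruct (Pcont a al Ha ltac:(lra) (d0 / (w + 1)) ltac:(apply Rdiv_lt_0_compat; unfold w; lra))
    as [d [Hd1 Hd2]].
  set (x := Rmin (a + d / 2) ((a + s) / 2)).
  assert (Hx1 : a < x).
  { unfold x. apply Rmin_case; lra. }
  assert (Hx2 : x < a + d) by (unfold x; pose proof (Rmin_l (a + d / 2) ((a + s) / 2)); lra).
  assert (Hx3 : x < s) by (unfold x; pose proof (Rmin_r (a + d / 2) ((a + s) / 2)); lra).
  destruct (Hd2 x ltac:(lra)) as [HP1 HP2]. fold A in HP1, HP2.
  destruct (mvt_in psi dpsi x s Hx3) as [ze [Hze Hm2]].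
  { intros y Hy. apply Hd. lra. }
  { apply (cwf_phi a b al f Df); auto; lra. }
  rewrite Hdpsi in Hm2.
  assert (Df ze <= Df xi) by (apply HDm; lra).
  assert (Hlt : psi s < psi x).
  { pose proof (Rpower_pos ze (al - 1)).
    assert ((Df ze - v * al) * Rpower ze (al - 1) * (s - x) < 0).
    { apply Rmult_neg_pos; [| lra]. apply Rmult_neg_pos; lra. }
    lra. }
  assert (Hfx : f x <= f a) by (apply Hfm; lra).
  unfold psi in Hlt.
  assert (Hw0 : 0 <= w) by (unfold w; lra).
  assert (H1 : d0 < w * (Rpower x al - A)) by (unfold d0, w in *; nra).
  assert (H2 : w * (Rpower x al - A) <= w * (d0 / (w + 1))).
  { apply Rmult_le_compat_l; lra. }
  assert (H3 : w * (d0 / (w + 1)) < d0).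
  { assert (d0 - w * (d0 / (w + 1)) = d0 / (w + 1)) by (field; lra).
    assert (0 < d0 / (w + 1)) by (apply Rdiv_lt_0_compat; lra). lra. }
  lra.
Qed.


Lemma dpow_is x al : 0 < x -> is_derive (fun s => Rpower s al) x (al * Rpower x (al - 1)).
Proof. intros Hx. apply is_derive_Reals, derivable_pt_lim_power; auto. Qed.

Lemma cont_pow x al : 0 < x -> continuous (fun s => Rpower s al) x.
Proof.
  intros Hx. apply (ex_derive_continuous (fun s => Rpower s al)).
  eexists. apply dpow_is; auto.
Qed.

Lemma int_poly u v al x y : 0 < x <= y -> 0 < al ->
  is_RInt (fun s => (u + v * rpow s al) * rpow s (al - 1)) x y
    ((u * (Rpower y al - Rpower x al) + v * (Rpower y al ^ 2 - Rpower x al ^ 2) / 2) / al).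
Proof.
  intros Hxy Hal.
  set (G := fun X => (u * X + v * X ^ 2 / 2) / al).
  set (F := fun s => G (Rpower s al)).
  set (F' := fun s => (u + v * Rpower s al) * Rpower s (al - 1)).
  replace ((u * (Rpower y al - Rpower x al) + v * (Rpower y al ^ 2 - Rpower x al ^ 2) / 2) / al)
    with (minus (F y) (F x)) by (unfold minus, plus, opp, F, G; simpl; field; lra).
  apply is_RInt_ext with F'.
  { rewrite Rmin_left, Rmax_right by lra. intros s Hs. unfold F'.
    rewrite !rpow_pos by lra. reflexivity. }
  apply (is_RInt_derive (V := R_CompleteNormedModule) F F').
  - rewrite Rmin_left, Rmax_right by lra. intros s Hs.
    assert (H : is_derive F s (scal (al * Rpower s (al - 1)) ((u + v * Rpower s al) / al))).
    { apply (is_derive_comp G (fun s => Rpower s al)).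
      - unfold G. auto_derive; auto. field. lra.
      - apply dpow_is; lra. }
    replace (F' s) with (scal (al * Rpower s (al - 1)) ((u + v * Rpower s al) / al)).
    + exact H.
    + unfold F', scal; simpl; unfold mult; simpl. field. lra.
  - rewrite Rmin_left, Rmax_right by lra. intros s Hs. unfold F'.
    apply (ex_derive_continuous (fun s => (u + v * Rpower s al) * Rpower s (al - 1))).
    apply (ex_derive_mult (fun s => u + v * Rpower s al) (fun s => Rpower s (al - 1))).
    + apply (ex_derive_plus (fun _ => u) (fun s => v * Rpower s al)).
      * apply ex_derive_const.
      * apply (ex_derive_scal (fun s => Rpower s al)). eexists; apply dpow_is; lra.
    + eexists; apply dpow_is; lra.
Qed.

Lemma ex_g a b al f Df x y : 0 < al <= 1 -> 0 <= a -> conf_deriv_on a b al f Df ->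
  a < x -> x <= y -> y <= b -> ex_RInt (fun s => f s * rpow s (al - 1)) x y.
Proof.
  intros Hal Ha Hc Hx Hxy Hy.
  set (h := fun s => f s * (1 * Rpower s (al - 1))).
  apply ex_RInt_ext with (fun s => h (clamp x y s)).
  { rewrite Rmin_left, Rmax_right by lra. intros s Hs. unfold h.
    rewrite clamp_id by lra. rewrite rpow_pos by lra. rewrite Rmult_1_l; reflexivity. }
  apply (ex_RInt_continuous (V := R_CompleteNormedModule)). intros z Hz. apply clamp_cont; auto.
  intros t Ht. unfold h. apply cwf_mult.
  - apply cwf_of_eps. intros e He.
    destruct (cont_f a b al f Df t Hal Hc ltac:(lra) ltac:(lra) e He) as [d [Hd Hd']].
    exists d. split; auto. intros w Hw Hwt. apply Hd'; auto. lra.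
  - apply cwf_cont. apply cont_cpow. lra.
Qed.


Lemma Plim a al : 0 <= a -> 0 < al ->
  filterlim (fun x => Rpower x al) (at_right a) (locally (rpow a al)).
Proof.
  intros Ha Hal. apply filterlim_locally. intro eps.
  destruct (Pcont a al Ha Hal eps (cond_pos eps)) as [d [Hd H]].
  exists (mkposreal d Hd). intros y Hy Hay.
  change (Rabs (y - a) < d) in Hy.
  change (Rabs (Rpower y al - rpow a al) < eps).
  apply Rabs_def2 in Hy. destruct (H y ltac:(lra)).
  apply Rabs_def1; lra.
Qed.

Lemma lim_ge (J Q : R -> R) I a al c : 0 <= a -> 0 < al -> a < c ->
  filterlim J (at_right a) (locally I) -> continuous Q (rpow a al) ->
  (forall x, a < x < c -> Q (Rpower x al) <= J x) -> Q (rpow a al) <= I.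
Proof.
  intros Ha Hal Hac HJ HQc H.
  assert (HQ : filterlim (fun x => Q (Rpower x al)) (at_right a) (locally (Q (rpow a al)))).
  { eapply filterlim_comp; [apply Plim; auto | exact HQc]. }
  assert (Hev : at_right a (fun x => Q (Rpower x al) <= J x)).
  { exists (mkposreal (c - a) ltac:(lra)). intros y Hy Hay.
    change (Rabs (y - a) < c - a) in Hy. apply Rabs_def2 in Hy. apply H. lra. }
  exact (filterlim_le (F := at_right a) _ _ (Q (rpow a al)) I Hev HQ HJ).
Qed.

Lemma lim_le (J Q : R -> R) I a al c : 0 <= a -> 0 < al -> a < c ->
  filterlim J (at_right a) (locally I) -> continuous Q (rpow a al) ->
  (forall x, a < x < c -> J x <= Q (Rpower x al)) -> I <= Q (rpow a al).
Proof.
  intros Ha Hal Hac HJ HQc H.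
  assert (HQ : filterlim (fun x => Q (Rpower x al)) (at_right a) (locally (Q (rpow a al)))).
  { eapply filterlim_comp; [apply Plim; auto | exact HQc]. }
  assert (Hev : at_right a (fun x => J x <= Q (Rpower x al))).
  { exists (mkposreal (c - a) ltac:(lra)). intros y Hy Hay.
    change (Rabs (y - a) < c - a) in Hy. apply Rabs_def2 in Hy. apply H. lra. }
  exact (filterlim_le (F := at_right a) _ _ I (Q (rpow a al)) Hev HJ HQ).
Qed.

Lemma gen_of_lim (g : R -> R) a b I : a < b -> (forall x, a < x < b -> ex_RInt g x b) ->
  filterlim (fun x => RInt g x b) (at_right a) (locally I) ->
  is_RInt_gen g (at_right a) (at_point b) I.
Proof.
  intros Hab Hex Hlim P HP.
  specialize (Hlim P HP).
  apply Filter_prod with (Q := fun x => a < x < b /\ P (RInt g x b)) (R := fun y => y = b).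
  - apply filter_and; [| exact Hlim].
    exists (mkposreal (b - a) ltac:(lra)). intros y Hy Hay.
    change (Rabs (y - a) < b - a) in Hy. apply Rabs_def2 in Hy. lra.
  - reflexivity.
  - intros x y [Hx HPx] Hy. subst y. simpl. exists (RInt g x b). split; auto.
    apply (RInt_correct (V := R_CompleteNormedModule)), Hex; auto.
Qed.


Lemma RInt_poly u v al x y : 0 < x <= y -> 0 < al ->
  RInt (fun s => (u + v * rpow s al) * rpow s (al - 1)) x y =
    (u * (Rpower y al - Rpower x al) + v * (Rpower y al ^ 2 - Rpower x al ^ 2) / 2) / al.
Proof. intros. apply (is_RInt_unique (V := R_CompleteNormedModule)). apply int_poly; auto. Qed.

Lemma ex_poly u v al x y : 0 < x <= y -> 0 < al ->
  ex_RInt (fun s => (u + v * rpow s al) * rpow s (al - 1)) x y.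
Proof. intros. eexists. apply int_poly; auto. Qed.

Lemma cont_quad u v B al X : continuous (fun X => (u * (B - X) + v * (B ^ 2 - X ^ 2) / 2) / al) X.
Proof.
  apply (ex_derive_continuous (fun X => (u * (B - X) + v * (B ^ 2 - X ^ 2) / 2) / al)).
  auto_derive. auto.
Qed.

Theorem mainTheorem9 (alpha a b : R) (f Df : R -> R) :
  0 < alpha <= 1 -> 0 <= a -> a < b ->
  conf_deriv_on a b alpha f Df ->
  (forall x y : R, a <= x -> x <= y -> y <= b -> Df x <= Df y) ->
  (forall x y : R, a <= x -> x <= y -> y <= b -> f y <= f x) ->
  exists I : R,
    is_RInt_gen (fun s => f s * rpow s (alpha - 1)) (at_right a) (at_point b) I /\
    f ((a + b) / 2) <= alpha / (rpow b alpha - rpow a alpha) * I /\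
    alpha / (rpow b alpha - rpow a alpha) * I <= f b + f a - f ((a + b) / 2).
Proof.
  intros Hal Ha Hab Hc HDm Hfm.
  set (al := alpha) in *.
  assert (Hal0 : 0 < al) by lra.
  rewrite (rpow_pos b) by lra.
  pose proof (AltB a b al Ha Hab Hal0) as HAB.
  pose proof (chord a b al f Df) as Hchord.
  set (A := rpow a al) in *. set (B := Rpower b al) in *.
  set (g := fun s => f s * rpow s (al - 1)).
  set (J := fun x => RInt g x b).
  set (Q0 := fun X => (f b * (B - X) + 0 * (B ^ 2 - X ^ 2) / 2) / al).
  set (K := fun x => J x - Q0 (Rpower x al)).
  assert (Hexg : forall x y, a < x -> x <= y -> y <= b -> ex_RInt g x y).
  { intros x y Hx Hxy Hy. apply (ex_g a b al f Df); auto. }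
  assert (Hw : forall s, 0 < s -> 0 < rpow s (al - 1)).
  { intros s Hs. rewrite rpow_pos by lra. apply Rpower_pos. }
  assert (HPpos : forall s, 0 < s -> rpow s al = Rpower s al).
  { intros s Hs. apply rpow_pos; auto. }
  assert (Kmono : forall x y, a < x -> x <= y -> y < b -> K y <= K x).
  { intros x y Hx Hxy Hy. unfold K, J.
    assert (Hch : RInt g x y + RInt g y b = RInt g x b).
    { assert (H1 : ex_RInt g x y) by (apply Hexg; lra).
      assert (H2 : ex_RInt g y b) by (apply Hexg; lra).
      exact (RInt_Chasles (V := R_CompleteNormedModule) g x y b H1 H2). }
    assert (Hle : RInt (fun s => (f b + 0 * rpow s al) * rpow s (al - 1)) x y <= RInt g x y).
    { apply RInt_le; [lra | apply ex_poly; lra | apply Hexg; lra |].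
      intros s Hs. unfold g. pose proof (Hw s ltac:(lra)).
        assert (f b <= f s) by (apply Hfm; lra).
        apply Rmult_le_compat_r; lra. }
    rewrite RInt_poly in Hle by lra.
    unfold Q0. lra. }
  assert (Kbound : forall x, a < x < b -> K x <= (f a - f b) * B / al).
  { intros x Hx. unfold K, J.
    assert (Hle : RInt g x b <= RInt (fun s => (f a + 0 * rpow s al) * rpow s (al - 1)) x b).
    { apply RInt_le; [lra | apply Hexg; lra | apply ex_poly; lra |].
      intros s Hs. unfold g. pose proof (Hw s ltac:(lra)).
        assert (f s <= f a) by (apply Hfm; lra).
        apply Rmult_le_compat_r; lra. }
    rewrite RInt_poly in Hle by lra.
    assert (f b <= f a) by (apply Hfm; lra).
    assert (0 < Rpower x al) by apply Rpower_pos.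
    assert (0 <= (f a - f b) * Rpower x al / al).
    { apply Rmult_le_pos; [apply Rmult_le_pos; lra | left; apply Rinv_0_lt_compat; lra]. }
    unfold Q0. fold B in Hle. unfold Rdiv in *. lra. }
  set (E := fun z => exists x, a < x < b /\ z = K x).
  assert (HEb : bound E).
  { exists ((f a - f b) * B / al). intros z [x [Hx ->]]. apply Kbound; auto. }
  assert (HEn : exists z, E z).
  { exists (K ((a + b) / 2)). exists ((a + b) / 2). split; [lra | reflexivity]. }
  destruct (completeness E HEb HEn) as [S [HS1 HS2]].
  assert (HKlim : filterlim K (at_right a) (locally S)).
  { apply filterlim_locally. intro eps.
    assert (Hx0 : exists x0, a < x0 < b /\ S - eps < K x0).
    { destruct (classic (exists x0, a < x0 < b /\ S - eps < K x0)) as [H|H]; auto.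
      exfalso. assert (S <= S - eps).
      { apply HS2. intros z [x [Hx ->]].
        destruct (Rle_or_lt (K x) (S - eps)) as [|Hlt]; auto.
        exfalso. apply H. exists x. auto. }
      pose proof (cond_pos eps). lra. }
    destruct Hx0 as [x0 [Hx0 HKx0]].
    exists (mkposreal (x0 - a) ltac:(lra)). intros y Hy Hay.
    change (Rabs (y - a) < x0 - a) in Hy. apply Rabs_def2 in Hy.
    change (Rabs (K y - S) < eps).
    assert (K y <= S) by (apply HS1; exists y; split; [lra | reflexivity]).
    assert (K x0 <= K y) by (apply Kmono; lra).
    apply Rabs_def1; lra. }
  assert (HJlim : filterlim J (at_right a) (locally (S + Q0 A))).
  { apply filterlim_ext with (fun x => K x + Q0 (Rpower x al)).
    { intro x. unfold K. ring. }
    apply (filterlim_comp_2 (G := locally S) (H := locally (Q0 A)) K (fun x => Q0 (Rpower x al)) Rplus HKlim).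
    - eapply filterlim_comp; [apply Plim; auto |]. apply cont_quad.
    - apply (filterlim_plus S (Q0 A)). }
  set (m := (a + b) / 2).
  assert (Hm : a < m < b) by (unfold m; lra).
  set (Pm := Rpower m al).
  pose proof (concave_mid a b al Ha Hab Hal) as Hconc.
  rewrite (rpow_pos b) in Hconc by lra. fold A B m Pm in Hconc.
  set (T := S + Q0 A).
  assert (HBA : 0 < B - A) by lra.
  exists T. split; [| split].
  - apply gen_of_lim; auto. intros x Hx. apply Hexg; lra.
  - set (K1 := Df m / al).
    assert (HK1 : K1 <= 0).
    { pose proof (Dneg a b al f Df m Hal Ha Hc Hfm Hm).
      unfold K1, Rdiv. assert (0 < / al) by (apply Rinv_0_lt_compat; lra). nra. }
    set (Q1 := fun X => ((f m - K1 * Pm) * (B - X) + K1 * (B ^ 2 - X ^ 2) / 2) / al).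
    assert (HI1 : Q1 A <= T).
    { apply (lim_ge J Q1 T a al b); auto.
      - unfold Q1. apply cont_quad.
      - intros x Hx. unfold J.
        replace (Q1 (Rpower x al)) with
          (RInt (fun s => ((f m - K1 * Pm) + K1 * rpow s al) * rpow s (al - 1)) x b)
          by (rewrite RInt_poly by lra; unfold Q1; fold B; reflexivity).
        apply RInt_le; [lra | apply ex_poly; lra | apply Hexg; lra |].
        intros s Hs. unfold g. pose proof (Hw s ltac:(lra)).
        rewrite (HPpos s) by lra.
        pose proof (tangent a b al f Df m s Hal Ha Hab Hc HDm Hm ltac:(lra)) as Ht.
        apply Rmult_le_compat_r; [lra |]. unfold K1. fold Pm in Ht. lra. }
    assert (HQ1 : Q1 A = (B - A) / al * (f m + K1 * ((A + B) / 2 - Pm))).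
    { unfold Q1. field. lra. }
    assert (0 <= K1 * ((A + B) / 2 - Pm)) by nra.
    assert (Hc1 : 0 <= al / (B - A)) by (apply Rlt_le, Rdiv_lt_0_compat; lra).
    apply Rmult_le_compat_l with (r := al / (B - A)) in HI1; auto.
    rewrite HQ1 in HI1.
    replace (al / (B - A) * ((B - A) / al * (f m + K1 * ((A + B) / 2 - Pm))))
      with (f m + K1 * ((A + B) / 2 - Pm)) in HI1 by (field; lra).
    lra.
  - set (v := (f b - f a) / (B - A)).
    assert (Hv : v * (B - A) = f b - f a) by (unfold v; field; lra).
    assert (Hfab : f b <= f a) by (apply Hfm; lra).
    assert (Hv0 : v <= 0).
    { unfold v, Rdiv. assert (0 < / (B - A)) by (apply Rinv_0_lt_compat; lra). nra. }
    set (Q2 := fun X => ((f a - v * A) * (B - X) + v * (B ^ 2 - X ^ 2) / 2) / al).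
    assert (HI2 : T <= Q2 A).
    { apply (lim_le J Q2 T a al b); auto.
      - unfold Q2. apply cont_quad.
      - intros x Hx. unfold J.
        replace (Q2 (Rpower x al)) with
          (RInt (fun s => ((f a - v * A) + v * rpow s al) * rpow s (al - 1)) x b)
          by (rewrite RInt_poly by lra; unfold Q2; fold B; reflexivity).
        apply RInt_le; [lra | apply Hexg; lra | apply ex_poly; lra |].
        intros s Hs. unfold g. pose proof (Hw s ltac:(lra)).
        rewrite (HPpos s) by lra.
        pose proof (Hchord s Hal Ha Hab Hc HDm Hfm ltac:(lra)) as Ht.
        apply Rmult_le_compat_r; [lra |]. fold v in Ht. lra. }
    assert (HQ2 : Q2 A = (B - A) / al * ((f a + f b) / 2)).
    { unfold Q2. replace (f b) with (f a + v * (B - A)) by lra. field. lra. }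
    assert (Hc1 : 0 <= al / (B - A)) by (apply Rlt_le, Rdiv_lt_0_compat; lra).
    apply Rmult_le_compat_l with (r := al / (B - A)) in HI2; auto.
    rewrite HQ2 in HI2.
    replace (al / (B - A) * ((B - A) / al * ((f a + f b) / 2)))
      with ((f a + f b) / 2) in HI2 by (field; lra).
    pose proof (Hchord m Hal Ha Hab Hc HDm Hfm ltac:(lra)) as Hcm. fold Pm v in Hcm.
    assert (v * (Pm - A) <= v * ((B - A) / 2)) by (apply Rmult_le_compat_neg_l; lra).
    lra.
Qed.
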